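(* Let $N>1$ and let the parameter space $\Theta$ of the correlated Bernoulli random graph model be nondegenerate. Then there does not exist an unbiased estimator of the heterogeneity correlation $\varrho_H$, i.e. there is no statistic $S:\mathcal{X}\to\mathbb{R}$ with $\mathbb{E}_\theta(S)=\varrho_H(\theta)$ for all $\theta\in\Theta$.
   Context: Correlated Bernoulli random graph model: fix a positive integer $N$ and let $\mathcal{R}=\{(p_1,\dots,p_N,\varrho_1,\dots,\varrho_N): p_i,\varrho_i\in[0,1]\}$; a parameter space is any $\Theta\subseteq\mathcal{R}$. For $\theta\in\Theta$, the pairs $(X_i,Y_i)$, $i=1,\dots,N$, of $\{0,1\}$-valued random variables are independent, $X_i,Y_i$ are marginally Bernoulli$(p_i)$ with Pearson correlation $\varrho_i$ (so $\mathbb{P}(X_i=Y_i=1)=p_i^2+\varrho_ip_i(1-p_i)$, $\mathbb{P}(X_i=Y_i=0)=(1-p_i)^2+\varrho_ip_i(1-p_i)$, $\mathbb{P}(X_i=1,Y_i=0)=\mathbb{P}(X_i=0,Y_i=1)=(1-\varrho_i)p_i(1-p_i)$). Sample space $\mathcal{X}=\{(x,y):x,y\in\{0,1\}^N\}$. Let $\mathcal{R}^o=\{(p_1,\dots,p_N,0,\dots,0):p_i\in\mathbb{R}\}$; $\Theta$ is nondegenerate if $\Theta\cap\mathcal{R}^o$ has an interior point relative to $\mathcal{R}^o$. Let $\mu=\frac1N\sum_i p_i$ and $\sigma^2=\frac1N\sum_i(p_i-\mu)^2$. The heterogeneity correlation is $\varrho_H=\frac{\sigma^2}{\mu(1-\mu)}$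 when $0<\mu<1$; when $\mu\in\{0,1\}$ it is defined by an arbitrary convention with value in $[0,1]$. *)

(* Defs.v *)
From HB Require Import structures.
From mathcomp Require Import all_boot all_order all_algebra.
From mathcomp Require Import reals.
Set Implicit Arguments. Unset Strict Implicit. Unset Printing Implicit Defensive.
Import Order.TTheory GRing.Theory Num.Theory.
Local Open Scope ring_scope.

(* A parameter theta = (p_1..p_N, rho_1..rho_N) is a pair of functions 'I_N -> R.
   A parameter space Theta is a predicate on such pairs. *)
Definition param (R : realType) (N : nat) := (('I_N -> R) * ('I_N -> R))%type.

Definition in_calR (R : realType) (N : nat) (th : param R N) : Prop :=
  forall i, (0 <= th.1 i <= 1) /\ (0 <= th.2 i <= 1).

(* Joint pmf of one pair (X_i, Y_i) with Bernoulli(p) marginals and correlation r *)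
Definition cell (R : realType) (p r : R) (a b : bool) : R :=
  match a, b with
  | true, true => p ^+ 2 + r * p * (1 - p)
  | false, false => (1 - p) ^+ 2 + r * p * (1 - p)
  | _, _ => (1 - r) * p * (1 - p)
  end.

Definition sample (N : nat) := ({ffun 'I_N -> bool} * {ffun 'I_N -> bool})%type.

Definition prob (R : realType) (N : nat) (th : param R N) (s : sample N) : R :=
  \prod_(i < N) cell (th.1 i) (th.2 i) (s.1 i) (s.2 i).

Definition expect (R : realType) (N : nat) (th : param R N) (S : sample N -> R) : R :=
  \sum_(s : sample N) S s * prob th s.

Definition mu (R : realType) (N : nat) (p : 'I_N -> R) : R :=
  (\sum_(i < N) p i) / N%:R.

Definition sigma2 (R : realType) (N : nat) (p : 'I_N -> R) : R :=
  (\sum_(i < N) (p i - mu p) ^+ 2) / N%:R.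

(* Heterogeneity correlation; conv is the (arbitrary) convention used when
   mu is 0 or 1. *)
Definition rhoH (R : realType) (N : nat) (conv : param R N -> R) (th : param R N) : R :=
  if (0 < mu th.1 < 1) then sigma2 th.1 / (mu th.1 * (1 - mu th.1)) else conv th.

(* Nondegenerate: Theta ∩ R^o has an interior point relative to
   R^o = {(p, 0) : p in R^N}, R^N with its usual (product / sup-norm) topology. *)
Definition nondegenerate_param (R : realType) (N : nat) (Theta : param R N -> Prop) : Prop :=
  exists p0 : 'I_N -> R, exists eps : R, 0 < eps /\
    forall q : 'I_N -> R, (forall i, `|q i - p0 i| < eps) -> Theta (q, fun _ => 0).

(* Main.v *)
Require Import Defs.
From HB Require Import structures.
From mathcomp Require Import all_boot all_order all_algebra.
From mathcomp Require Import reals.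
From mathcomp Require Import ring lra.
Import Order.TTheory GRing.Theory Num.Theory.
Local Open Scope ring_scope.

Section Aux.
Variables (R : realType) (N : nat).
Hypothesis N1 : (1 < N)%N.

Lemma N0 : (N%:R : R) != 0.
Proof. by rewrite pnatr_eq0; case: N N1. Qed.

Lemma muD (c : 'I_N -> R) t : mu (fun i => c i + t) = mu c + t.
Proof.
rewrite /mu big_split /= sumr_const card_ord -mulr_natr.
by field; apply: N0.
Qed.

Lemma sigma2D (c : 'I_N -> R) t : sigma2 (fun i => c i + t) = sigma2 c.
Proof.
rewrite /sigma2 muD; congr (_ / _); apply: eq_bigr => i _.
by congr (_ ^+ 2); ring.
Qed.

Lemma mu_ge0 (c : 'I_N -> R) : (forall i, 0 <= c i) -> 0 <= mu c.
Proof.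
move=> h; rewrite /mu divr_ge0 ?ler0n //; exact: sumr_ge0.
Qed.

Lemma mu_le0 (c : 'I_N -> R) : (forall i, c i <= 0) -> mu c <= 0.
Proof.
move=> h; rewrite /mu pmulr_lle0 ?invr_gt0 ?ltr0n; last by case: N N1.
by rewrite -oppr_ge0 -sumrN; apply: sumr_ge0 => i _; rewrite oppr_ge0.
Qed.

Lemma sigma2_eq0 (c : 'I_N -> R) : sigma2 c = 0 -> forall i, c i = mu c.
Proof.
move=> h i; move/eqP: h; rewrite /sigma2 mulf_eq0 invr_eq0 (negPf N0) orbF.
move/eqP/psumr_eq0P => H.
by apply/eqP; rewrite -subr_eq0 -sqrf_eq0; apply/eqP/H => // j _; apply: sqr_ge0.
Qed.

Definition cellP (a : R) (x y : bool) : {poly R} :=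
  match x, y with
  | true, true => (a%:P + 'X) ^+ 2
  | false, false => (1 - (a%:P + 'X)) ^+ 2
  | _, _ => (a%:P + 'X) * (1 - (a%:P + 'X))
  end.

Lemma cellPE a x y t : (cellP a x y).[t] = cell (a + t) 0 x y.
Proof.
by case: x; case: y; rewrite /cellP /cell !hornerE /=; ring.
Qed.

Definition Ppoly (c : 'I_N -> R) (S : sample N -> R) : {poly R} :=
  \sum_(s : sample N) S s *: \prod_(i < N) cellP (c i) (s.1 i) (s.2 i).

Lemma PpolyE c S t :
  (Ppoly c S).[t] = expect ((fun i => c i + t), (fun _ => 0)) S.
Proof.
rewrite /Ppoly /expect horner_sum; apply: eq_bigr => s _.
rewrite hornerZ horner_prod /prob; congr (_ * _).
by apply: eq_bigr => i _; rewrite cellPE.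
Qed.


Lemma mu_ext (f g : 'I_N -> R) : (forall i, f i = g i) -> mu f = mu g.
Proof. by move=> h; rewrite /mu; congr (_ / _); apply: eq_bigr => i _. Qed.

Lemma sigma2_ext (f g : 'I_N -> R) : (forall i, f i = g i) -> sigma2 f = sigma2 g.
Proof.
by move=> h; rewrite /sigma2 (@mu_ext f g h); congr (_ / _); apply: eq_bigr => i _; rewrite h.
Qed.

Lemma key (Theta : param R N -> Prop) (conv : param R N -> R) (S : sample N -> R)
  (c : 'I_N -> R) (r : R) : 0 < r ->
  (forall th, Theta th -> in_calR th) ->
  (forall q, (forall i, `|q i - c i| < r) -> Theta (q, fun _ => 0)) ->
  (forall th, Theta th -> expect th S = rhoH conv th) ->
  sigma2 c != 0 -> False.
Proof.
move=> r0 hcal hball hS hs.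
pose r' := r / 2.
have r'0 : 0 < r' by rewrite /r'; lra.
have r'r : r' < r by rewrite /r'; lra.
have hc : forall i, r' <= c i <= 1 - r'.
  move=> i.
  have [h1 _] := hcal _ (hball (fun j => c j + r') ltac:(move=> j; rewrite addrC addKr ger0_norm ?r'r //; exact: ltW)) i.
  have [h2 _] := hcal _ (hball (fun j => c j - r') ltac:(move=> j; rewrite addrC addKr normrN ger0_norm ?r'r //; exact: ltW)) i.
  move: h1 h2 => /= /andP [h1 h1'] /andP [h2 h2']; apply/andP; split; lra.
have hm : r' <= mu c <= 1 - r'.
  have e1 : mu c = mu (fun i => c i - r') + r'.
    by rewrite -muD; apply: mu_ext => i; ring.
  have e2 : mu c = mu (fun i => c i - (1 - r')) + (1 - r').
    by rewrite -muD; apply: mu_ext => i; ring.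
  have g1 : 0 <= mu (fun i => c i - r').
    by apply: mu_ge0 => i; have /andP[? ?] := hc i; lra.
  have g2 : mu (fun i => c i - (1 - r')) <= 0.
    by apply: mu_le0 => i; have /andP[? ?] := hc i; lra.
  apply/andP; split; lra.
pose m := mu c.
pose Q := Ppoly c S * ((m%:P + 'X) * (1 - (m%:P + 'X))) - (sigma2 c)%:P.
have hroot : forall t, `|t| < r' -> Q.[t] = 0.
  move=> t ht.
  have hT : Theta ((fun i => c i + t), fun _ => 0).
    by apply: hball => i; rewrite addrC addKr; lra.
  rewrite /Q !hornerE PpolyE hS // /rhoH /= muD sigma2D.
  move: ht; rewrite ltr_norml => /andP [ht1 ht2].
  move: hm => /andP [hm1 hm2].
  have -> : (0 < mu c + t < 1) = true by apply/andP; split; rewrite /m in hm1 hm2 *; lra.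
  rewrite /m; field.
  apply/andP; split; apply: lt0r_neq0; lra.
have Q0 : Q = 0.
  apply/eqP; apply: contraT => nz.
  pose rs := [seq r' / (k.+2)%:R | k <- iota 0 (size Q)].
  have := max_poly_roots nz (rs := rs).
  rewrite size_map size_iota ltnn; apply.
  - apply/allP => x /mapP [k _ ->]; apply/eqP/hroot.
    rewrite ger0_norm; last by rewrite divr_ge0 ?ler0n // ltW.
    rewrite ltr_pdivrMr ?ltr0n // ltr_pMr // ltr1n //.
  - rewrite map_inj_uniq ?iota_uniq // => a b /= e.
    have : ((a.+2)%:R : R)^-1 = ((b.+2)%:R)^-1.
      by apply: (mulfI (lt0r_neq0 r'0)).
    by move=> /invr_inj /eqP; rewrite eqr_nat !eqSS => /eqP.
have hz : ((m%:P + 'X) * (1 - (m%:P + 'X))).[- m] = 0.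
  by rewrite !hornerE addrN mul0r.
have := congr1 (fun p => p.[- m]) Q0.
rewrite /Q /= hornerD hornerN hornerM hz mulr0 hornerC horner0 sub0r.
by move/eqP; rewrite oppr_eq0 (negPf hs).
Qed.

End Aux.

Theorem theorem4 (R : realType) (N : nat) (Theta : param R N -> Prop)
  (conv : param R N -> R) :
  (1 < N)%N ->
  (forall th, Theta th -> in_calR th) ->
  nondegenerate_param Theta ->
  (forall th, 0 <= conv th <= 1) ->
  ~ (exists S : sample N -> R,
       forall th, Theta th -> expect th S = rhoH conv th).
Proof.
move=> N1 hcal [p0 [eps [heps hb]]] _ [S hS].
have [s0|s0] := eqVneq (sigma2 p0) 0; last first.
  exact: (@key R N N1 Theta conv S p0 eps heps hcal hb hS s0).
have lt0 : (0 < N)%N := ltnW N1.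
pose i0 : 'I_N := Ordinal lt0.
pose i1 : 'I_N := Ordinal N1.
pose c := fun i => p0 i + (if i == i0 then eps / 2 else 0).
have he2 : 0 < eps / 2 by lra.
apply: (@key R N N1 Theta conv S c (eps / 2) he2 hcal _ hS).
  move=> q hq; apply: hb => i; have := hq i.
  rewrite /c !ltr_norml; case: (i == i0) => /andP [h1 h2]; apply/andP; split; lra.
apply/eqP => sc.
have e0 := @sigma2_eq0 R N N1 _ sc i0; have e1 := @sigma2_eq0 R N N1 _ sc i1.
have f0 := @sigma2_eq0 R N N1 _ s0 i0; have f1 := @sigma2_eq0 R N N1 _ s0 i1.
move: e0 e1; rewrite /c eqxx.
have -> : (i1 == i0) = false by [].
move=> e0 e1; lra.
Qed.
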